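(* Let $k\ge\ell\ge0$ be integers. (1) $$\binom{k}{\ell}_{\mathbb{Z},\mathbb{N}}=\prod_{b=2}^k b^{\beta(k,\ell,b)},\qquad \beta(k,\ell,b):=\sum_{i=1}^\infty\left(\left\lfloor\frac{k}{b^i}\right\rfloor-\left\lfloor\frac{\ell}{b^i}\right\rfloor-\left\lfloor\frac{k-\ell}{b^i}\right\rfloor\right).$$ (2) For every $b\ge2$, $$\beta(k,\ell,b)=\frac{1}{b-1}\big(d_b(\ell)+d_b(k-\ell)-d_b(k)\big),$$ where $d_b(j)$ denotes the sum of the base-$b$ digits of $j$.
   Context: $\mathbb{N}=\{0,1,2,\dots\}$. For an integer $b\ge0$ and $a\in\mathbb{Z}$ define $\operatorname{ord}_b(a):=\sup\{k\in\mathbb{N}: a\mathbb{Z}\subseteq b^k\mathbb{Z}\}$ (convention $0^0=1$); thus for $b\ge2$ it is the largest $k$ with $b^k\mid a$ ($+\infty$ for $a=0$), $\operatorname{ord}_0(a)=+\infty$ if $a=0$ and $0$ otherwise, and $\operatorname{ord}_1(a)=+\infty$. For nonempty $S\subseteq\mathbb{Z}$, a $b$-ordering of $S$ is a sequence $(a_i)_{i\ge0}$ in $S$ such that for each $i\ge1$, $a_i$ attains $\min_{a'\in S}\sum_{j=0}^{i-1}\operatorname{ord}_b(a'-a_j)$; the $b$-exponent sequence is $\alpha_k(S,b):=\sum_{j=0}^{k-1}\operatorname{ord}_b(a_k-a_j)$ for any $b$-ordering (independent of the choice). For $\mathcal{T}\subseteq\mathbb{N}$ the generalized factorial is $k!_{S,\mathcal{T}}:=\prod_{b\in\mathcal{T}}b^{\alpha_k(S,b)}$,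 with conventions $b^{+\infty}=0$ for $b=0$ and $b\ge2$, $1^{+\infty}=1$, and $b^0=1$ for all $b\in\mathbb{N}$. The generalized binomial coefficient is $\binom{k}{\ell}_{S,\mathcal{T}}:=k!_{S,\mathcal{T}}/(\ell!_{S,\mathcal{T}}(k-\ell)!_{S,\mathcal{T}})$ for $0\le\ell\le k<|S|$. *)

(* Defs.v *)
From Stdlib Require Import ClassicalEpsilon.
From mathcomp Require Import all_boot all_order all_algebra.
Set Implicit Arguments. Unset Strict Implicit. Unset Printing Implicit Defensive.
Import Order.TTheory GRing.Theory Num.Theory.

(* Extended naturals N ∪ {+oo}: [None] is +oo. *)
Definition enat := option nat.

Definition eadd (x y : enat) : enat :=
  match x, y with Some m, Some n => Some (m + n)%N | _, _ => None end.

Definition ele (x y : enat) : bool :=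
  match x, y with
  | _, None => true
  | None, Some _ => false
  | Some m, Some n => (m <= n)%N
  end.

(* ord_b(a) := sup { k : a Z ⊆ b^k Z } = sup { k : b^k | a }.  The set is
   downward closed and contains 0, so the sup is +oo if every k is in it,
   and otherwise (least k not in it) - 1. *)
Definition ord (b : nat) (a : int) : enat :=
  match excluded_middle_informative
          (exists k, ~~ ((b ^ k)%:Z %| a)%Z) with
  | left H => Some (ex_minn H).-1
  | right _ => None
  end.

Definition sumord (b : nat) (a : nat -> int) (i : nat) (x : int) : enat :=
  \big[eadd/Some 0%N]_(j < i) ord b (x - a j).

Definition is_bordering (S : pred int) (b : nat) (a : nat -> int) : Prop :=
  (forall i, S (a i)) /\
  (forall i, (0 < i)%N -> forall x, S x -> ele (sumord b a i (a i)) (sumord b a i x)).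

(* alpha_k(S,b), computed along some b-ordering (independent of the choice);
   junk value +oo if no b-ordering exists. *)
Definition alpha (S : pred int) (b k : nat) : enat :=
  match excluded_middle_informative (exists a, is_bordering S b a) with
  | left H => let a := proj1_sig (constructive_indefinite_description _ H) in
              sumord b a k (a k)
  | right _ => None
  end.

(* b^e with conventions b^{+oo} = 0 for b = 0 and b >= 2, 1^{+oo} = 1,
   and 0^0 = 1 (as in ssrnat). *)
Definition epow (b : nat) (e : enat) : nat :=
  match e with
  | Some n => (b ^ n)%N
  | None => if b == 1%N then 1%N else 0%N
  end.

(* Infinite product over nat of a finitely supported family (all but
   finitely many factors equal to 1); junk value 0 otherwise. *)
Definition fprod (f : nat -> nat) : nat :=
  match excluded_middle_informative (exists N, forall i, (N <= i)%N -> f i = 1%N) with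
  | left H => let N := proj1_sig (constructive_indefinite_description _ H) in
              (\prod_(i < N) f i)%N
  | right _ => 0%N
  end.

(* Infinite sum over nat of a finitely supported integer family; junk 0 otherwise. *)
Definition fsum (f : nat -> int) : int :=
  match excluded_middle_informative (exists N, forall i, (N <= i)%N -> f i = 0%R) with
  | left H => let N := proj1_sig (constructive_indefinite_description _ H) in
              (\sum_(i < N) f i)%R
  | right _ => 0%R
  end.

Definition gfact (S : pred int) (T : pred nat) (k : nat) : nat :=
  fprod (fun b => if T b then epow b (alpha S b k) else 1%N).

Definition gbinom (S : pred int) (T : pred nat) (k l : nat) : rat :=
  ((gfact S T k)%:R / ((gfact S T l)%:R * (gfact S T (k - l))%:R))%R.

Definition beta (k l b : nat) : int :=
  fsum (fun i => if i == 0%N then 0%R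
                 else (Posz (k %/ b ^ i) - Posz (l %/ b ^ i) - Posz ((k - l) %/ b ^ i))%R).

Definition digsum (b j : nat) : int :=
  fsum (fun i => Posz ((j %/ b ^ i) %% b)).

(* Main.v *)
Require Import Defs.
From mathcomp Require Import all_boot all_order all_algebra.
Import Order.TTheory GRing.Theory Num.Theory.
From Stdlib Require Import ClassicalEpsilon.
From HB Require Import structures.
From mathcomp Require Import zify.
Set Implicit Arguments. Unset Strict Implicit.

Lemma eaddA : associative eadd.
Proof. by move=> [x|] [y|] [z|] //=; rewrite addnA. Qed.
Lemma eaddC : commutative eadd.
Proof. by move=> [x|] [y|] //=; rewrite addnC. Qed.
Lemma add0e : left_id (Some 0%N) eadd.
Proof. by move=> [x|]. Qed.
HB.instance Definition _ := Monoid.isComLaw.Build enat (Some 0%N) eadd eaddA eaddC add0e.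

Section Core.
Variable b : nat.
Hypothesis hb : (1 < b)%N.

Definition dv (i : nat) (y : int) : bool := ((b ^ i)%:Z %| y)%Z.

Lemma dv_shift i x y c : dv i (x - y) -> dv i (x - c) = dv i (y - c).
Proof.
move=> h; rewrite /dv.
have -> : (x - c = (x - y) + (y - c))%R by rewrite addrA subrK.
by rewrite rpredDl.
Qed.

Lemma dv0 y : dv 0 y.
Proof. by rewrite /dv expn0 dvd1z. Qed.

Lemma dv_mono i i' y : (i <= i')%N -> dv i' y -> dv i y.
Proof.
move=> hi; rewrite /dv !dvdzE /= => h.
by apply: dvdn_trans h; apply: dvdn_exp2l.
Qed.

Lemma dv_big i y : y != 0%R -> (`|y| < b ^ i)%N -> ~~ dv i y.
Proof.
move=> y0 hy; rewrite /dv dvdzE /=; apply/negP => /dvdn_leq.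
rewrite absz_gt0 y0 => /(_ isT); lia.
Qed.

Lemma part (m : nat) (t : int) : (0 < m)%N ->
  (\sum_(r < m) ((Posz m %| (Posz r - t)%R)%Z : nat))%N = 1%N.
Proof.
move=> m0.
have mz : (Posz m != 0)%R by rewrite eqz_nat -lt0n.
have h1 : (0 <= (t %% Posz m)%Z)%R := modz_ge0 t mz.
have h2 : ((t %% Posz m)%Z < Posz m)%R by apply: ltz_pmod; rewrite ltz_nat.
set u := (t %% Posz m)%Z in h1 h2.
have [n un] : exists n, u = Posz n by clear h2; move: h1; case: u => // n _; exists n.
have hn : (n < m)%N by rewrite -ltz_nat -un.
have key (r : 'I_m) : (Posz m %| (Posz r - t)%R)%Z = (val r == n).
  rewrite -eqz_mod_dvd modz_small; last by rewrite lez_nat ltz_nat ltn_ord.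
  by rewrite -/u un eqz_nat.
rewrite (bigD1 (Ordinal hn)) // key eqxx big1 ?addn0 //.
by move=> i hi; rewrite key; move: hi; rewrite -(inj_eq val_inj) /= => /negbTE ->.
Qed.

Variable a : nat -> int.

Definition C (k i : nat) (x : int) : nat := (\sum_(j < k) dv i (x - a j))%N.
Definition q (k i : nat) : nat := (k %/ b ^ i)%N.
Definition bal k := forall i x, (q k i <= C k i x <= (q k i).+1)%N.

Lemma C_shift k i x y : dv i (x - y) -> C k i x = C k i y.
Proof. by move=> h; apply: eq_bigr => j _; rewrite (dv_shift _ h). Qed.

Lemma C_mono k i i' x : (i <= i')%N -> (C k i' x <= C k i x)%N.
Proof.
move=> hi; apply: leq_sum => j _.
by case h: (dv i' _) => //=; rewrite (dv_mono hi h).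
Qed.

Lemma C0 k x : C k 0 x = k.
Proof.
rewrite /C; under eq_bigr => j _ do rewrite dv0.
by rewrite sum_nat_const card_ord muln1.
Qed.

Lemma C_S k i x : C k.+1 i x = (C k i x + dv i (x - a k))%N.
Proof. by rewrite /C big_ord_recr. Qed.

Lemma C_part k i : (\sum_(r < b ^ i) C k i (Posz r))%N = k.
Proof.
rewrite /C exchange_big /=.
rewrite -[RHS](card_ord k) -sum1_card; apply: eq_bigr => j _.
by apply: part; rewrite expn_gt0 ltnW.
Qed.

Lemma C_descent k n w :
  (\sum_(d < b) C k n.+1 (w + Posz (d * b ^ n))%R)%N = C k n w.
Proof.
rewrite /C exchange_big /=; apply: eq_bigr => j _.
case h: (dv n (w - a j)).
  move: h; rewrite /dv => /dvdzP [t ht].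
  have bn0 : (Posz (b ^ n) != 0)%R by rewrite eqz_nat expn_eq0; lia.
  rewrite [RHS]/= -(part (-t) (ltnW hb)); apply: eq_bigr => d _.
  have -> : (w + Posz (d * b ^ n) - a j = (t + Posz d) * Posz (b ^ n))%R.
    by rewrite mulrDl -ht PoszM addrAC.
  by rewrite /dv expnS PoszM dvdz_mul2r // opprK addrC.
rewrite big1 // => d _; case h1: (dv _ _) => //.
move/negbT: h; rewrite (_ : w - a j = (w + Posz (d * b ^ n) - a j) - Posz (d * b ^ n))%R; last first.
  by rewrite addrAC addrK.
rewrite /dv rpredB ?(dv_mono (leqnSn n) h1) //.
- exact: (dv_mono (leqnSn n) h1).
- by rewrite dvdzE /= dvdn_mull.
Qed.

Lemma bpos i : (0 < b ^ i)%N.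
Proof. by rewrite expn_gt0 ltnW. Qed.

Lemma q0 k : q k 0 = k.
Proof. by rewrite /q expn0 divn1. Qed.

Lemma qS k n : q k n.+1 = (q k n %/ b)%N.
Proof. by rewrite /q expnSr divnMA. Qed.

Lemma q_big k i : (k < b ^ i)%N -> q k i = 0%N.
Proof. by move=> h; rewrite /q divn_small. Qed.

Lemma exp_big n : (n < b ^ n)%N.
Proof. exact: ltn_expl. Qed.

Lemma C_big k i x : (forall j, (j < k)%N -> x != a j /\ (`|x - a j| < b ^ i)%N) ->
  C k i x = 0%N.
Proof.
move=> h; apply: big1 => j _; have [h1 h2] := h j (ltn_ord j).
by rewrite (negbTE (dv_big _ h2)) // subr_eq0.
Qed.

Lemma dv_sym i x y : dv i (x - y) = dv i (y - x).
Proof. by rewrite -opprB /dv rpredN. Qed.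

Lemma witness k : bal k -> exists w, forall i, C k i w = q k i.
Proof.
move=> hbal.
have H n : exists w, forall i, (i <= n)%N -> C k i w = q k i.
  elim: n => [|n [w IH]].
    by exists 0%R => i; rewrite leqn0 => /eqP ->; rewrite C0 q0.
  have [/existsP [d /eqP hd]| hne] :=
    boolP [exists d : 'I_b, C k n.+1 (w + Posz (d * b ^ n))%R == q k n.+1].
    exists (w + Posz (d * b ^ n))%R => i; rewrite leq_eqVlt => /orP [/eqP -> //|].
    rewrite ltnS => hi; rewrite -(IH i hi); apply: C_shift.
    rewrite addrAC subrr add0r /dv dvdzE /=.
    by apply: dvdn_mull; apply: dvdn_exp2l.
  exfalso.
  have hall (d : 'I_b) : ((q k n.+1).+1 <= C k n.+1 (w + Posz (d * b ^ n))%R)%N.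
    have := hbal n.+1 (w + Posz (d * b ^ n))%R.
    move/negP: hne => hne; rewrite ltn_neqAle => /andP [-> _]; rewrite andbT.
    by apply/negP => /eqP E; apply: hne; apply/existsP; exists d; rewrite E.
  have : (\sum_(d < b) (q k n.+1).+1 <= \sum_(d < b) C k n.+1 (w + Posz (d * b ^ n))%R)%N.
    by apply: leq_sum => d _; exact: hall.
  rewrite C_descent (IH n (leqnn n)).
  rewrite sum_nat_const card_ord qS.
  have := ltn_ceil (q k n) (ltnW hb); rewrite mulnC; lia.
have [w hw] := H k; exists w => i.
case: (leqP i k) => hik; first exact: hw.
have hq : q k i = 0%N by apply: q_big; apply: (ltn_trans (exp_big k)); rewrite ltn_exp2l.
rewrite hq; apply/eqP; rewrite -leqn0.
apply: leq_trans (C_mono k w (ltnW hik)) _.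
by rewrite hw // q_big // exp_big.
Qed.

Lemma step k : bal k -> (forall i, C k i (a k) = q k i) -> bal k.+1.
Proof.
move=> hbal hak i x; rewrite C_S.
have hd := divnS k (bpos i); rewrite -/(q k.+1 i) -/(q k i) in hd.
case h: (dv i (x - a k)).
  rewrite (C_shift k h) hak hd; case: (_ %| _)%N => /=; lia.
rewrite addn0.
case hdiv: (b ^ i %| k.+1)%N; last by rewrite hd hdiv add0n; apply: hbal.
rewrite hd hdiv /=.
have := hbal i x; case/andP => h1 h2.
suff : (q k i < C k i x)%N by move=> hh; apply/andP; split; lia.
rewrite ltn_neqAle h1 andbT; apply/negP => /eqP hx.
set m := (b ^ i)%N.
have hr (r : 'I_m) : (C k i (Posz r) + dv i (Posz r - x) + dv i (Posz r - a k) <= (q k i).+1)%N.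
  case h3: (dv i (Posz r - x)).
    have h4 : dv i (Posz r - a k) = false.
      apply/negbTE/negP => h4; move/negbT: h; rewrite -(dv_shift (a k) h3) h4.
      done.
    by rewrite h4 (C_shift k h3) -hx addn0 addn1.
  case h4: (dv i (Posz r - a k)).
    by rewrite (C_shift k h4) hak addn0 addn1.
  by rewrite !addn0; case/andP: (hbal i (Posz r)).
have : (\sum_(r < m) (C k i (Posz r) + dv i (Posz r - x) + dv i (Posz r - a k)) <= \sum_(r < m) (q k i).+1)%N.
  by apply: leq_sum => r _; exact: hr.
rewrite !big_split /= C_part sum_nat_const card_ord.
have e1 := part x (bpos i); have e2 := part (a k) (bpos i).
rewrite /dv -/m in e1 e2 *; rewrite e1 e2.
have := hdiv; move/dvdnP => [c hc].
have hc' : q k.+1 i = c by rewrite /q -/m hc mulnK // bpos.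
rewrite hdiv hc' in hd.
have -> : (q k i).+1 = c by rewrite hd.
rewrite mulnC -hc; lia.
Qed.

Lemma ord_val y M : y != 0%R -> (`|y| < b ^ M)%N ->
  ord b y = Some (\sum_(1 <= i < M) dv i y)%N.
Proof.
move=> y0 hyM; rewrite /ord.
case: excluded_middle_informative => [H|H]; last first.
  by exfalso; apply: H; exists M; apply: dv_big.
case: ex_minnP => m hm hmin.
have hm' : ~~ dv m y by [].
have m1 : (1 <= m)%N by case: m hm hm' {hmin} => //; rewrite dv0.
have mM : (m <= M)%N by apply: hmin; exact: (dv_big y0 hyM).
rewrite (big_cat_nat m1 mM) /= [X in (_ + X)%N]big1_seq ?addn0.
  rewrite (eq_big_nat _ _ (F2 := fun _ => 1%N)) ?sum_nat_const_nat ?muln1 ?subn1 //.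
  move=> i /andP [_ hi]; case h: (dv i y) => //.
  by have := hmin i (negbT h); rewrite leqNgt hi.
move=> i /andP [_]; rewrite mem_index_iota => /andP [hi _].
by case h: (dv i y) => //; move: hm'; rewrite (dv_mono hi h).
Qed.

Lemma ord_0 : ord b 0 = None.
Proof.
rewrite /ord; case: excluded_middle_informative => // H; exfalso.
case: H => k; apply/negP; apply/negPn.
by rewrite dvdz0.
Qed.

Lemma eaddN x : eadd x None = None.
Proof. by case: x. Qed.

Lemma sumord_none k x j : (j < k)%N -> x = a j -> sumord b a k x = None.
Proof.
elim: k => // k IH; rewrite ltnS leq_eqVlt => /orP [/eqP ->|hj] hx.
  by rewrite /sumord big_ord_recr /= hx subrr ord_0 eaddN.
by rewrite /sumord big_ord_recr /= -/(sumord b a k x) (IH hj hx).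
Qed.

Lemma sumord_some k x M :
  (forall j, (j < k)%N -> x != a j /\ (`|x - a j| < b ^ M)%N) ->
  sumord b a k x = Some (\sum_(1 <= i < M) C k i x)%N.
Proof.
elim: k => [|k IH] h.
  rewrite /sumord big_ord0; congr Some; rewrite big1_seq //.
  by move=> i _; rewrite /C big_ord0.
rewrite /sumord big_ord_recr /= -/(sumord b a k x).
rewrite IH; last by move=> j hj; apply: h; apply: ltnW.
have [h1 h2] := h k (ltnSn k).
rewrite (ord_val (M := M)) ?subr_eq0 //= -big_split /=.
by congr Some; apply: eq_bigr => i _; rewrite C_S.
Qed.

Lemma bigM (f : nat -> nat) k n : exists M, (n <= M)%N /\ forall j, (j < k)%N -> (f j < b ^ M)%N.
Proof.
elim: k => [|k [M [hM hf]]]; first by exists n.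
exists (maxn M (f k)); split; first by apply: leq_trans hM (leq_maxl _ _).
move=> j; rewrite ltnS leq_eqVlt => /orP [/eqP ->|hj].
  exact: leq_trans (exp_big _) (leq_pexp2l (ltnW hb) (leq_maxr _ _)).
exact: leq_trans (hf j hj) (leq_pexp2l (ltnW hb) (leq_maxl _ _)).
Qed.

Definition A k := (\sum_(1 <= i < k.+1) q k i)%N.

Lemma A_ext k M : (k.+1 <= M)%N -> (\sum_(1 <= i < M) q k i)%N = A k.
Proof.
move=> hM; rewrite /A (big_cat_nat (n := k.+1)) //= [X in (_ + X)%N]big1_seq ?addn0 //.
move=> i /andP [_]; rewrite mem_index_iota => /andP [hi _].
by apply: q_big; apply: leq_trans (exp_big _) _; rewrite leq_exp2l // ltnW.
Qed.

Lemma C_ne k i x j : C k i x = 0%N -> (j < k)%N -> x != a j.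
Proof.
move=> hC hj; apply/negP => /eqP hx.
have : (0 < C k i x)%N.
  rewrite /C (bigD1 (Ordinal hj)) //= -hx subrr.
  by rewrite /dv dvdz0.
by rewrite hC.
Qed.

Lemma valx k x : (forall i, C k i x = q k i) -> sumord b a k x = Some (A k).
Proof.
move=> hx.
have [M [hM hf]] := bigM (fun j => `|x - a j|%N) k k.+1.
have hC : C k M x = 0%N by rewrite hx q_big // (leq_trans (exp_big _)) // leq_exp2l // ltnW.
rewrite (sumord_some (M := M)).
  by congr Some; rewrite -(A_ext hM); apply: eq_bigr => i _; rewrite hx.
by move=> j hj; split; [exact: C_ne hC hj | exact: hf].
Qed.

Lemma minimal k : bal k -> (forall i, C k i (a k) = q k i) ->
  forall x, ele (sumord b a k (a k)) (sumord b a k x).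
Proof.
move=> hbal hak x; rewrite (valx hak).
have [/existsP [j /eqP hj]|hn] := boolP [exists j : 'I_k, x == a j].
  by rewrite (sumord_none (ltn_ord j) hj).
have [M [hM hf]] := bigM (fun j => `|x - a j|%N) k k.+1.
rewrite (sumord_some (M := M)) /=; last first.
  move=> j hj; split; last exact: hf.
  by apply/negP => /eqP e; move/negP: hn; apply; apply/existsP; exists (Ordinal hj); rewrite e.
rewrite -(A_ext hM); apply: leq_sum => i _.
by case/andP: (hbal i x).
Qed.

Lemma sum_eq_pt m n (f g : nat -> nat) :
  (forall i, (m <= i < n)%N -> (f i <= g i)%N) ->
  (\sum_(m <= i < n) g i <= \sum_(m <= i < n) f i)%N ->
  forall i, (m <= i < n)%N -> f i = g i.
Proof.
elim: n => [|n IH] hfg hs i hi; first by move: hi; rewrite ltn0 andbF.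
have mn : (m <= n)%N by case/andP: hi => h1 h2; apply: leq_trans h1 _.
move: hs; rewrite !big_nat_recr //= => hs.
have h1 : (\sum_(m <= i < n) f i <= \sum_(m <= i < n) g i)%N.
  rewrite big_nat_cond [X in (_ <= X)%N]big_nat_cond; apply: leq_sum => j /andP [hj _]; apply: hfg; case/andP: hj => -> /= /ltnW.
  by rewrite ltnS.
have h2 := hfg n; rewrite mn ltnSn /= in h2; have h2' := h2 isT.
have e1 : f n = g n by lia.
have e2 : (\sum_(m <= i < n) g i <= \sum_(m <= i < n) f i)%N by lia.
case/andP: hi => hi1; rewrite ltnS leq_eqVlt => /orP [/eqP -> //|hi2].
apply: IH => //; last by rewrite hi1.
by move=> j /andP [j1 j2]; apply: hfg; rewrite j1 ltnW.
Qed.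

Lemma main : is_bordering predT b a ->
  forall k, bal k /\ forall i, C k i (a k) = q k i.
Proof.
move=> [_ hord]; elim=> [|k [hbal hak]].
  by split => [i x|i]; rewrite /C /q big_ord0 div0n.
have hbal' := step hbal hak; split => //.
have [w hw] := witness hbal'.
have hmin := hord k.+1 isT w isT.
rewrite (valx hw) in hmin.
have [/existsP [j /eqP hj]|hn] := boolP [exists j : 'I_k.+1, a k.+1 == a j].
  by rewrite (sumord_none (ltn_ord j) hj) in hmin.
have [M [hM hf]] := bigM (fun j => `|a k.+1 - a j|%N) k.+1 k.+2.
have hne j : (j < k.+1)%N -> a k.+1 != a j /\ (`|a k.+1 - a j| < b ^ M)%N.
  move=> hj; split; last exact: hf.
  by apply/negP => /eqP e; move/negP: hn; apply; apply/existsP; exists (Ordinal hj); rewrite e.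
rewrite (sumord_some hne) /= -(A_ext hM) in hmin.
move=> i.
case: i => [|i]; first by rewrite C0 q0.
case: (ltnP i.+1 M) => hiM.
  apply/esym; apply: (sum_eq_pt (m := 1) (n := M) (f := q k.+1) (g := fun i => C k.+1 i (a k.+1))) => //.
  by move=> i' _; case/andP: (hbal' i' (a k.+1)).
rewrite C_big; last by move=> j hj; have [h1 h2] := hne j hj; split => //;
  apply: leq_trans h2 _; rewrite leq_exp2l.
rewrite q_big //; apply: leq_trans (exp_big _) _; rewrite leq_exp2l //.
by apply: leq_trans hiM; apply: ltnW.
Qed.

End Core.

Definition a0 (j : nat) : int := Posz j.

Lemma count_a0 b i k : (1 < b)%N -> C b a0 k i (Posz k) = q b k i.
Proof.
move=> hb; rewrite /q; elim: k => [|k IH]; first by rewrite /C big_ord0 div0n.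
rewrite /C big_ord_recl /= divnS ?expn_gt0 ?(ltnW hb) //; congr addn.
  by rewrite /dv subr0.
rewrite -IH /C; apply: eq_bigr => j _; congr (nat_of_bool (dv _ _ _)).
rewrite /a0 /= /bump /= add1n; lia.
Qed.

Lemma a0_inv b (hb : (1 < b)%N) k : bal b a0 k /\ forall i, C b a0 k i (a0 k) = q b k i.
Proof.
have h2 k' : forall i, C b a0 k' i (a0 k') = q b k' i by move=> i; apply: count_a0.
split; last exact: h2.
elim: k => [|k IH]; first by move=> i x; rewrite /C /q big_ord0 div0n.
exact: step.
Qed.

Lemma a0_ord b (hb : (1 < b)%N) : is_bordering predT b a0.
Proof.
split => // i _ x _; have [h1 h2] := a0_inv hb i; exact: minimal.
Qed.

Lemma alpha_val b k : (1 < b)%N -> alpha predT b k = Some (A b k).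
Proof.
move=> hb; rewrite /alpha; case: excluded_middle_informative => [H|H]; last first.
  by exfalso; apply: H; exists a0; exact: a0_ord.
case: (constructive_indefinite_description _ H) => a ha /=.
have [h1 h2] := main hb ha k; exact: valx.
Qed.

Lemma ord0b y : y != 0%R -> ord 0 y = Some 0%N.
Proof.
move=> y0; rewrite /ord; case: excluded_middle_informative => [H|H]; last first.
  by exfalso; apply: H; exists 1%N; rewrite expn1 dvdzE /= dvd0n absz_eq0.
case: ex_minnP => m hm hmin.
have m1 : (m <= 1)%N by apply: hmin; rewrite expn1 dvdzE /= dvd0n absz_eq0.
case: m hm hmin m1 => [|[|m]] //.
Qed.

Lemma sumord0b a k x : (forall j, (j < k)%N -> x != a j) -> sumord 0 a k x = Some 0%N.
Proof.
elim: k => [|k IH] h; first by rewrite /sumord big_ord0.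
rewrite /sumord big_ord_recr /= -/(sumord 0 a k x) IH; last by move=> j hj; apply: h; apply: ltnW.
by rewrite ord0b // subr_eq0 h.
Qed.

Lemma alpha0 k : alpha predT 0 k = Some 0%N.
Proof.
rewrite /alpha; case: excluded_middle_informative => [H|H]; last first.
  exfalso; apply: H; exists a0; split => // i _ x _.
  rewrite sumord0b; first by case: (sumord _ _ _ _).
  by move=> j hj; rewrite /a0 eqz_nat; apply/eqP => e; move: hj; rewrite e ltnn.
case: (constructive_indefinite_description _ H) => a [_ ha] /=.
case: k => [|k]; first by rewrite /sumord big_ord0.
set x := Posz (\sum_(j < k.+1) `|a j|).+1.
have := ha k.+1 isT x isT; rewrite (sumord0b (x := x)).
  by case: (sumord _ _ _ _) => // n /=; rewrite leqn0 => /eqP ->.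
move=> j hj; apply/negP => /eqP e.
have : (`|x| <= \sum_(j < k.+1) `|a j|)%N.
  by rewrite e (bigD1 (Ordinal hj)) //= leq_addr.
by rewrite /x /= ltnn.
Qed.

Lemma epow1 e : epow 1 e = 1%N.
Proof. by case: e => //= n; rewrite exp1n. Qed.

Lemma fprod_eq f N : (forall i, (N <= i)%N -> f i = 1%N) -> Defs.fprod f = (\prod_(i < N) f i)%N.
Proof.
move=> hf; rewrite /Defs.fprod; case: excluded_middle_informative => [H|H]; last first.
  by exfalso; apply: H; exists N.
case: (constructive_indefinite_description _ H) => N' hN' /=.
have gen N1 N2 : (forall i, (N1 <= i)%N -> f i = 1%N) -> (N1 <= N2)%N ->
    (\prod_(i < N2) f i)%N = (\prod_(i < N1) f i)%N.
  move=> h hN; rewrite -!(big_mkord xpredT) (big_cat_nat (n := N1)) //= [X in (_ * X)%N]big1_seq ?muln1 //.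
  by move=> i /andP [_]; rewrite mem_index_iota => /andP [hi _]; exact: h.
by case: (leqP N N') => hN; [apply: gen | symmetry; apply: gen => //; apply: ltnW].
Qed.

Lemma fsum_eq (f : nat -> int) N : (forall i, (N <= i)%N -> f i = 0%R) -> fsum f = (\sum_(i < N) f i)%R.
Proof.
move=> hf; rewrite /fsum; case: excluded_middle_informative => [H|H]; last first.
  by exfalso; apply: H; exists N.
case: (constructive_indefinite_description _ H) => N' hN' /=.
have gen N1 N2 : (forall i, (N1 <= i)%N -> f i = 0%R) -> (N1 <= N2)%N ->
    (\sum_(i < N2) f i)%R = (\sum_(i < N1) f i)%R.
  move=> h hN; rewrite -!(big_mkord xpredT) (big_cat_nat (n := N1)) //= [X in (_ + X)%R]big1_seq ?addr0 //.
  by move=> i /andP [_]; rewrite mem_index_iota => /andP [hi _]; exact: h.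
by case: (leqP N N') => hN; [apply: gen | symmetry; apply: gen => //; apply: ltnW].
Qed.

Definition Fb b n := if (b < 2)%N then 1%N else (b ^ A b n)%N.

Lemma A_small b n : (1 < b)%N -> (n < b)%N -> A b n = 0%N.
Proof.
move=> hb hn; rewrite /A big1_seq // => i /andP [_]; rewrite mem_index_iota => /andP [hi _].
rewrite /q divn_small //; apply: leq_trans hn _.
by rewrite -{1}(expn1 b) leq_exp2l.
Qed.

Lemma f_eq b n : epow b (alpha predT b n) = Fb b n.
Proof.
rewrite /Fb; case: b => [|[|b]] /=; first by rewrite alpha0.
  by rewrite epow1.
by rewrite alpha_val.
Qed.

Lemma gfact_eq n N : (n < N)%N -> gfact predT predT n = (\prod_(0 <= b < N) Fb b n)%N.
Proof.
move=> hN; rewrite big_mkord /gfact (fprod_eq (N := N)) /=.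
  by apply: eq_bigr => b _; rewrite f_eq.
move=> b hb; rewrite f_eq /Fb; case: ifP => // hb2.
move/negbT: hb2; rewrite -leqNgt => hb2.
rewrite A_small ?expn0 //.
exact: leq_trans hN hb.
Qed.

Lemma Posz_sum (r : seq nat) (F : nat -> nat) :
  Posz (\sum_(i <- r) F i)%N = (\sum_(i <- r) Posz (F i))%R.
Proof. exact: (big_morph Posz PoszD (erefl _)). Qed.

Lemma beta_eq k l b : (1 < b)%N -> (l <= k)%N ->
  beta k l b = (Posz (A b k) - Posz (A b l) - Posz (A b (k - l)))%R.
Proof.
move=> hb hlk; rewrite /beta (fsum_eq (N := k.+1)); last first.
  move=> i hi; have i0 : (i == 0%N) = false by case: i hi.
  have hbig : (k < b ^ i)%N.
    by apply: leq_trans (exp_big hb i); apply: leq_trans hi.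
  rewrite i0 !divn_small //; first by apply: leq_ltn_trans hbig; apply: leq_subr.
  exact: leq_ltn_trans hlk hbig.
rewrite -(big_mkord xpredT (fun i => if i == 0%N then 0%R else (Posz (k %/ b ^ i) - Posz (l %/ b ^ i) - Posz ((k - l) %/ b ^ i))%R)) big_ltn //= add0r.
rewrite -(A_ext hb (k := k) (M := k.+1)) // -(A_ext hb (k := l) (M := k.+1)) ?ltnS // -(A_ext hb (k := k - l) (M := k.+1)) ?ltnS ?leq_subr //.
rewrite !Posz_sum -!sumrB; apply: eq_big_nat => i /andP [hi _].
by case: i hi.
Qed.

Definition Dn b n := (\sum_(i < n.+1) (n %/ b ^ i %% b))%N.

Lemma digA b n : (1 < b)%N -> (Dn b n + b.-1 * A b n)%N = n.
Proof.
move=> hb.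
have S : (\sum_(i < n.+1) n %/ b ^ i)%N = (Dn b n + b * \sum_(i < n.+1) n %/ b ^ i.+1)%N.
  rewrite /Dn big_distrr -big_split /=; apply: eq_bigr => i _.
  by rewrite expnSr divnMA addnC mulnC -divn_eq.
have e1 : (\sum_(i < n.+1) n %/ b ^ i.+1)%N = A b n.
  by rewrite -(A_ext hb (M := n.+2)) // big_add1 /= big_mkord.
have e2 : (\sum_(i < n.+1) n %/ b ^ i)%N = (n + A b n)%N.
  rewrite big_ord_recl expn0 divn1; congr addn.
  by rewrite -(A_ext hb (M := n.+1)) // big_add1 /= big_mkord.
rewrite e1 e2 in S.
have hb' : b = (b.-1).+1 by rewrite prednK // ltnW.
have hm : (b * A b n = b.-1 * A b n + A b n)%N.
  by rewrite addnC -mulSn prednK // ltnW.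
lia.
Qed.

Lemma digsum_eq b n : (1 < b)%N -> digsum b n = Posz (Dn b n).
Proof.
move=> hb; rewrite /digsum (fsum_eq (N := n.+1)).
  by rewrite /Dn -(big_mkord xpredT (fun i => Posz ((n %/ b ^ i) %% b))) -Posz_sum big_mkord.
move=> i hi; rewrite divn_small ?mod0n //.
by apply: leq_trans (exp_big hb i); apply: leq_trans hi.
Qed.

Lemma termeq k l b : (2 <= b)%N -> (l <= k)%N ->
  (((Fb b k)%:R : rat) * ((Fb b l)%:R * (Fb b (k - l))%:R)^-1 = (b%:R : rat) ^ beta k l b)%R.
Proof.
move=> hb hlk; rewrite beta_eq // /Fb.
have -> : (b < 2)%N = false by rewrite ltnNge hb.
have x0 : ((b%:R : rat) != 0)%R by rewrite pnatr_eq0; case: b hb.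
rewrite !natrX expfzDr // expfzDr // -!exprnN invfM mulrA //.
Qed.

Lemma Fb_big b n : (n < b)%N -> Fb b n = 1%N.
Proof.
rewrite /Fb; case: ifP => // /negbT; rewrite -leqNgt => hb hn.
by rewrite A_small // expn0.
Qed.

Lemma part1 k l : (l <= k)%N ->
  gbinom predT predT k l
    = (\prod_(2 <= b < k.+1) ((b%:R : rat) ^ beta k l b))%R.
Proof.
move=> hlk.
have hN n : (n <= k)%N -> (n < k.+2)%N by move=> h; apply: leq_trans h _.
rewrite /gbinom (gfact_eq (N := k.+2) (n := k)) ?hN //.
rewrite (gfact_eq (N := k.+2) (n := l)) ?hN //.
rewrite (gfact_eq (N := k.+2) (n := k - l)) ?hN ?leq_subr //.
rewrite !natr_prod -big_split /= -prodfV -big_split /=.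
rewrite (big_cat_nat (n := 2)) //= [X in (X * _)%R]big1_seq ?mul1r; last first.
  move=> i /andP [_]; rewrite mem_index_iota => /andP [_ hi].
  by rewrite /Fb hi !mulr1n mulr1.
case: k hlk hN => [|k] hlk hN.
  by rewrite !big_geq.
rewrite big_nat_recr //= Fb_big // Fb_big ?ltnS // Fb_big ?ltnS ?leq_subr //.
rewrite !mulr1n mulr1 ?invr1 ?mulr1; apply: eq_big_nat => b /andP [hb _].
exact: termeq.
Qed.

Lemma part2 k l b : (l <= k)%N -> (2 <= b)%N ->
     ((beta k l b)%:~R : rat)
       = (((digsum b l + digsum b (k - l) - digsum b k)%:~R : rat) / (b.-1)%:R)%R.
Proof.
move=> hlk hb.
have e : (Posz b.-1 * beta k l b = digsum b l + digsum b (k - l) - digsum b k)%R.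
  rewrite beta_eq // !digsum_eq //.
  have := digA k hb; have := digA l hb; have := digA (k - l) hb.
  rewrite !mulrBr -!PoszM.
  set X1 := (b.-1 * A b k)%N; set X2 := (b.-1 * A b l)%N; set X3 := (b.-1 * A b (k - l))%N.
  lia.
rewrite -e intrM.
have -> : (((Posz b.-1)%:~R : rat) = (b.-1)%:R)%R by [].
rewrite [in RHS]mulrC mulKf // pnatr_eq0 -lt0n; lia.
Qed.

Unset Implicit Arguments. Set Strict Implicit.

Theorem theorem7p4 (k l : nat) (hlk : (l <= k)%N) :
  gbinom predT predT k l
    = (\prod_(2 <= b < k.+1) ((b%:R : rat) ^ beta k l b))%R
  /\
  (forall b : nat, (2 <= b)%N ->
     ((beta k l b)%:~R : rat)
       = (((digsum b l + digsum b (k - l) - digsum b k)%:~R : rat) / (b.-1)%:R)%R).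
Proof.
split; first exact: part1.
by move=> b hb; apply: part2.
Qed.
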